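(* Suppose that for every connected bipartite graph $H$ of even order and every weight function $w\colon V(H)\to\{0,1\}$, Alice wins the graph-grabbing game on $(H,w)$. Then for every connected graph $G$ of even order that has no induced subgraph isomorphic to a corona of an odd cycle and a point, and every weight function $w\colon V(G)\to\{0,1\}$, Alice wins the graph-grabbing game on $(G,w)$.
   Context: The graph-grabbing game is played by two players, Alice and Bob, on a connected graph $G$ with a weight function $w\colon V(G)\to\mathbb{R}_{\ge 0}$. Starting with Alice, the players alternately remove one vertex of the current graph, subject to the rule that the vertices remaining after each removal induce a connected subgraph of $G$ (the empty set counts as allowed at the end). When all vertices have been removed, each player's score is the total weight of the vertices that player removed; both players aim to maximise their own score. Alice is said to win on $(G,w)$ if she has a strategy guaranteeing her a score of at least half of $\sum_{v\in V(G)} w(v)$. The corona of an odd cycle and a point is the graph obtained from a cycle $x_1x_2\cdots x_r$ with $r\ge 3$ odd by adding $r$ new vertices $y_1,\dots,y_r$, with $y_i$ adjacent only to $x_i$ (i.e. each cycle vertex receives one pendant leaf). *)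

(* Defs.v *)
From mathcomp Require Import all_boot.
Set Implicit Arguments. Unset Strict Implicit. Unset Printing Implicit Defensive.

Definition simple_graph (T : finType) (adj : rel T) : Prop :=
  symmetric adj /\ irreflexive adj.

Definition induced_rel (T : finType) (adj : rel T) (S : {set T}) : rel T :=
  [rel x y | [&& adj x y, x \in S & y \in S]].

(* S induces a connected subgraph (the empty set counts as connected). *)
Definition connected_set (T : finType) (adj : rel T) (S : {set T}) : Prop :=
  forall x y, x \in S -> y \in S -> connect (induced_rel adj S) x y.

Definition connected_graph (T : finType) (adj : rel T) : Prop :=
  connected_set adj [set: T].

Definition bipartite (T : finType) (adj : rel T) : Prop :=
  exists f : T -> bool, forall x y, adj x y -> f x != f y.

Definition legal_move (T : finType) (adj : rel T) (S : {set T}) (v : T) : Prop :=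
  v \in S /\ connected_set adj (S :\ v).

(* [alice_wins_from adj w S turn a]: from position with remaining vertices S,
   Alice to move iff [turn], Alice having collected [a] so far, Alice has a
   strategy guaranteeing a final score of at least half the total weight. *)
Inductive alice_wins_from (T : finType) (adj : rel T) (w : T -> nat)
  : {set T} -> bool -> nat -> Prop :=
| awf_end : forall b a, 2 * a >= \sum_(v : T) w v ->
    alice_wins_from adj w set0 b a
| awf_alice : forall S a v, S != set0 -> legal_move adj S v ->
    alice_wins_from adj w (S :\ v) false (a + w v) ->
    alice_wins_from adj w S true a
| awf_bob : forall S a, S != set0 ->
    (forall v, legal_move adj S v -> alice_wins_from adj w (S :\ v) true a) ->
    alice_wins_from adj w S false a.

Definition alice_wins (T : finType) (adj : rel T) (w : T -> nat) : Prop :=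
  alice_wins_from adj w [set: T] true 0.

(* Corona of the cycle x_0 ... x_{r-1} and a point:
   vertices inl i = x_i, inr i = y_i. *)
Definition cycle_adj (r : nat) (i j : 'I_r) : bool :=
  (val j == (val i).+1 %% r) || (val i == (val j).+1 %% r).

Definition corona_adj (r : nat) : rel ('I_r + 'I_r) :=
  fun a b => match a, b with
  | inl i, inl j => cycle_adj i j
  | inl i, inr j => i == j
  | inr i, inl j => i == j
  | inr _, inr _ => false
  end.

Definition has_induced_odd_corona (T : finType) (adj : rel T) : Prop :=
  exists r : nat, [/\ 3 <= r, odd r &
    exists f : 'I_r + 'I_r -> T,
      injective f /\ forall a b, adj (f a) (f b) = corona_adj a b].

(* Main.v *)
Require Import Defs.
From mathcomp Require Import all_boot.
From mathcomp Require Import zify.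
From Stdlib Require Import Classical.
Set Implicit Arguments. Unset Strict Implicit. Unset Printing Implicit Defensive.

Definition owalk (T : finType) (adj : rel T) (S : {set T}) (L : nat) (g : nat -> T) :=
  [/\ odd L, g L = g 0, (forall k, k < L -> adj (g k) (g k.+1)) &
      (forall k, k < L -> g k \in S)].

Definition icycle (T : finType) (adj : rel T) (L : nat) (g : nat -> T) :=
  (forall i j, i < j -> j < L -> g i != g j) /\
  (forall i j, i < j -> j < L -> adj (g i) (g j) -> j = i.+1 \/ (i = 0 /\ j = L.-1)).

Lemma owalk_short (T : finType) (adj : rel T) (S : {set T}) :
  symmetric adj ->
  forall L g, owalk adj S L g ->
  exists L' g', owalk adj S L' g' /\ icycle adj L' g'.
Proof.
move=> sym L; elim: L {-2}L (leqnn L) => [|n IH] L.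
  by move=> hL g [] ; rewrite (_ : L = 0) //; lia.
move=> hL g Hw.
case: (classic (icycle adj L g)) => Hc; first by exists L, g.
case: Hw => oL gL gadj gS.
have [[i [j [hij hjL /negPn/eqP eqg]]] | [i [j [hij hjL hch hno]]]] :
   (exists i j, [/\ i < j, j < L & ~~ (g i != g j)]) \/
   (exists i j, [/\ i < j, j < L, adj (g i) (g j) & ~ (j = i.+1 \/ (i = 0 /\ j = L.-1))]).
  apply: NNPP => H; apply: Hc; split.
    move=> i j h1 h2; apply: NNPP => H2; apply: H; left; exists i, j; split => //; exact/negP.
  move=> i j h1 h2 h3; apply: NNPP => H2; apply: H; right; exists i, j; by split.
- have HL : L = (j - i) + (L - (j - i)) by lia.
  have : odd (j - i) || odd (L - (j - i)).
    by move: oL; rewrite {1}HL oddD; case: (odd _); case: (odd _).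
  case/orP => od.
  + apply: (IH (j - i) _ (fun k => g (i + k))); first by lia.
    split => //.
    * by rewrite addn0 subnKC ?eqg //; lia.
    * by move=> k hk /=; rewrite addnS; apply: gadj; lia.
    * by move=> k hk; apply: gS; lia.
  + pose h k := if k <= i then g k else g (k + (j - i)).
    apply: (IH (L - (j - i)) _ h); first by lia.
    split => //.
    * rewrite /h; case: ifP => H1; first lia.
      by rewrite subnK ?gL //; lia.
    * move=> k hk; rewrite /h; case: ifP => H1; case: ifP => H2.
      - by apply: gadj; lia.
      - have -> : k = i by lia.
        rewrite (_ : i.+1 + (j - i) = j.+1); last lia.
        by rewrite eqg; apply: gadj.
      - lia.
      - by rewrite addSn; apply: gadj; lia.
    * by move=> k hk; rewrite /h; case: ifP => H1; apply: gS; lia.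
- have HL : (j - i).+1 + (i.+1 + (L - j)) = L.+2 by lia.
  have : odd (j - i).+1 || odd (i.+1 + (L - j)).
    have : odd ((j - i).+1 + (i.+1 + (L - j))) by rewrite HL /= negbK.
    by rewrite oddD; case: (odd _); case: (odd _).
  case/orP => od.
  + pose h k := if k <= j - i then g (i + k) else g i.
    apply: (IH (j - i).+1 _ h); first by lia.
    split => //.
    * by rewrite /h ltnn leq0n addn0.
    * move=> k hk; rewrite /h; case: ifP => H1; case: ifP => H2.
      - by rewrite addnS; apply: gadj; lia.
      - have -> : i + k = j by lia.
        by rewrite sym.
      - lia.
      - lia.
    * by move=> k hk; rewrite /h; case: ifP => H1; apply: gS; lia.
  + pose h k := if k <= i then g k else g (k - i.+1 + j).
    apply: (IH (i.+1 + (L - j)) _ h); first by lia.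
    split => //.
    * rewrite /h; case: ifP => H1; first lia.
      by rewrite (_ : i.+1 + (L - j) - i.+1 + j = L) ?gL //; lia.
    * move=> k hk; rewrite /h; case: ifP => H1; case: ifP => H2.
      - by apply: gadj; lia.
      - have -> : k = i by lia.
        by rewrite (_ : i.+1 - i.+1 + j = j) //; lia.
      - lia.
      - rewrite (_ : k.+1 - i.+1 + j = (k - i.+1 + j).+1); last lia.
        by apply: gadj; lia.
    * by move=> k hk; rewrite /h; case: ifP => H1; apply: gS; lia.
Qed.


Lemma connect_map (T1 T2 : finType) (e1 : rel T1) (e2 : rel T2) (f : T1 -> T2) :
  (forall x y, e1 x y -> e2 (f x) (f y)) ->
  forall x y, connect e1 x y -> connect e2 (f x) (f y).
Proof.
move=> H x y /connectP [p Hp ->]; elim: p x Hp => [|z p IH] x /=.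
  by rewrite connect0.
case/andP => Hxz Hp; apply: connect_trans (IH _ Hp).
exact/connect1/H.
Qed.

Definition dbl (T : finType) (adj : rel T) (S : {set T}) : rel (T * bool) :=
  fun p q => [&& adj p.1 q.1, p.1 \in S, q.1 \in S & q.2 == ~~ p.2].

Lemma dbl_parity (T : finType) (adj : rel T) (S : {set T}) x p :
  path (dbl adj S) x p -> (last x p).2 = x.2 (+) odd (size p).
Proof.
elim: p x => [|z p IH] x /=; first by rewrite addbF.
case/andP => /and4P [_ _ _ /eqP H] Hp.
by rewrite IH // H /=; case: (x.2); case: (odd _).
Qed.

Lemma bip_or_odd (T : finType) (adj : rel T) (S : {set T}) s :
  symmetric adj -> s \in S -> connected_set adj S ->
  (exists f : T -> bool, forall x y, x \in S -> y \in S -> adj x y -> f x != f y)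
  \/ exists L g, owalk adj S L g.
Proof.
move=> sym sS cS.
set e := dbl adj S.
case: (boolP (connect e (s, false) (s, true))) => Hodd.
  right; case/connectP: Hodd => p Hp Hl.
  have Hpar := dbl_parity Hp; rewrite -Hl /= in Hpar.
  exists (size p), (fun k => (nth (s, false) ((s, false) :: p) k).1).
  have Hk := (pathP (s, false) Hp).
  split.
  - by rewrite -Hpar.
  - by rewrite (_ : size p = (size ((s, false) :: p)).-1) // nth_last /= -Hl.
  - move=> k hk; have := Hk k hk; rewrite /e /dbl => /and4P [].
    by rewrite -[nth _ p k]/(nth (s, false) ((s, false) :: p) k.+1).
  - move=> k hk; have := Hk k hk; rewrite /e /dbl => /and4P [] //.
left.
have esym : symmetric e.
  move=> [a b] [c d]; rewrite /e /dbl /= sym.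
  by apply/and4P/and4P => [[-> -> -> /eqP ->]|[-> -> -> /eqP ->]]; rewrite ?negbK.
have eflip : forall p q, e p q -> e (p.1, ~~ p.2) (q.1, ~~ q.2).
  move=> [a b] [c d]; rewrite /e /dbl /= => /and4P [-> -> -> /eqP ->].
  by rewrite !eqxx.
have both : forall x b, connect e (s, false) (x, b) -> ~~ connect e (s, false) (x, ~~ b).
  move=> x b H1; apply/negP => H2; move/negP: Hodd; apply.
  apply: (connect_trans H1).
  have := connect_map eflip H2; rewrite /= negbK => H3.
  by rewrite (sym_connect_sym esym) in H3.
have lift : forall x, x \in S -> exists b, connect e (s, false) (x, b).
  move=> x xS; have := cS s x sS xS; case/connectP => p Hp ->.
  suff : forall p y, path (induced_rel adj S) y p ->
     (exists b, connect e (s, false) (y, b)) ->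
     exists b, connect e (s, false) (last y p, b).
    by apply => //; exists false; exact: connect0.
  elim=> [|z q IH] y //=.
  case/andP => /and3P [Hyz yS zS] Hq [b Hy].
  apply: (IH z Hq); exists (~~ b); apply: (connect_trans Hy); apply: connect1.
  by rewrite /e /dbl /= Hyz yS zS eqxx.
exists (fun x => connect e (s, false) (x, false)) => x y xS yS Hxy.
have [bx Hx] := lift x xS.
have Hy : connect e (s, false) (y, ~~ bx).
  apply: (connect_trans Hx); apply: connect1.
  by rewrite /e /dbl /= Hxy xS yS eqxx.
case: bx Hx Hy => /= Hx Hy.
- by rewrite Hy (negbTE (both _ _ Hx)).
- by rewrite Hx; have := both _ _ Hy.
Qed.


Lemma modS_cases i L : i < L -> i.+1 %% L = if i.+1 < L then i.+1 else 0.
Proof.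
move=> h; case: ifP => h2; first by rewrite modn_small.
have -> : i.+1 = L by lia.
by rewrite modnn.
Qed.

Lemma induced_sym (T : finType) (adj : rel T) Y :
  symmetric adj -> connect_sym (induced_rel adj Y).
Proof.
move=> sym; apply: sym_connect_sym => x y.
by rewrite /induced_rel /= sym; case: (adj y x); case: (x \in Y); case: (y \in Y).
Qed.

Lemma run (T : finType) (adj : rel T) (Y : {set T}) (g : nat -> T) a b :
  a <= b -> (forall k, a <= k -> k < b -> adj (g k) (g k.+1)) ->
  (forall k, a <= k -> k <= b -> g k \in Y) ->
  connect (induced_rel adj Y) (g a) (g b).
Proof.
elim: b => [|b IH] hab Hadj HY.
  by have -> : a = 0 by lia; rewrite connect0.
case: (leqP a b) => h.
  apply: (connect_trans (IH h _ _)).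
  - by move=> k h1 h2; apply: Hadj; lia.
  - by move=> k h1 h2; apply: HY; lia.
  apply: connect1; rewrite /induced_rel /= Hadj // !HY //; lia.
by have -> : a = b.+1 by lia; rewrite connect0.
Qed.

Lemma escape (T : finType) (adj : rel T) (S : {set T}) x z :
  z \in S :\ x -> connect (induced_rel adj S) z x ->
  exists y, [/\ y \in S :\ x, adj y x & connect (induced_rel adj (S :\ x)) z y].
Proof.
move=> zY /connectP [p Hp Hl].
elim: p z zY Hp Hl => [|u p IH] z zY /=.
  by move=> _ Hzx; move: zY; rewrite Hzx setD11.
case/andP => /and3P [Hzu zS uS] Hp Hl.
case: (eqVneq u x) => [Hux|Hux].
  by exists z; split; [exact: zY | rewrite -Hux | exact: connect0].
have uY : u \in S :\ x by rewrite !inE Hux.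
have [y [yY Hyx Hc]] := IH u uY Hp Hl.
exists y; split => //; apply: connect_trans Hc; apply: connect1.
by rewrite /induced_rel /= Hzu zY uY.
Qed.


Lemma corona_of_cycle (T : finType) (adj : rel T) (S : {set T}) L g :
  simple_graph adj -> owalk adj S L g -> icycle adj L g -> connected_set adj S ->
  (forall v, legal_move adj S v -> forall a b, a \in S -> b \in S ->
      adj v a -> adj v b -> a = b) ->
  has_induced_odd_corona adj.
Proof.
move=> [sym irr] [oL gL gadj gS] [gdist gch] cS deg1.
have L3 : 3 <= L.
  case: L oL gL gadj {gdist gch gS deg1} => [|[|[|L]]] //= _ gL gadj.
  by have := gadj 0 isT; rewrite gL irr.
have ginj : forall i j, i < L -> j < L -> g i = g j -> i = j.
  move=> i j hi hj hg; case: (ltngtP i j) => // h.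
  - by have := gdist i j h hj; rewrite hg eqxx.
  - by have := gdist j i h hi; rewrite hg eqxx.
pose cyc (i j : nat) := (j == i.+1 %% L) || (i == j.+1 %% L).
have cycadj : forall i j, i < L -> j < L -> adj (g i) (g j) = cyc i j.
  move=> i j hi hj; rewrite /cyc !modS_cases //.
  apply/idP/idP.
  - move=> H; case: (ltngtP i j) => h.
    + have [->|[-> ->]] := gch i j h hj H; case: ifP; case: ifP => h1 h2; apply/orP; lia.
    + rewrite sym in H.
      have [->|[-> ->]] := gch j i h hi H; case: ifP; case: ifP => h1 h2; apply/orP; lia.
    + by move: H; rewrite h irr.
  - case: ifP => h1; case: ifP => h2 /orP [] /eqP h3.
    + by rewrite h3; apply: gadj.
    + by rewrite h3 sym; apply: gadj.
    + by rewrite h3; apply: gadj.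
    + have -> : j = L.-1 by lia.
      by rewrite h3 -gL sym (_ : L = L.-1.+1) ?gadj //; lia.
    + have -> : i = L.-1 by lia.
      by rewrite h3 -gL (_ : L = L.-1.+1) ?gadj //; lia.
    + by rewrite h3 sym; apply: gadj.
    + have -> : i = L.-1 by lia.
      by rewrite h3 -gL (_ : L = L.-1.+1) ?gadj //; lia.
    + have -> : j = L.-1 by lia.
      by rewrite h3 -gL sym (_ : L = L.-1.+1) ?gadj //; lia.
have ncut : forall i, i < L -> ~ connected_set adj (S :\ g i).
  move=> i hi Hc.
  have [j1 [j2 [hj1 hj2 Hne c1 c2]]] :
      exists j1 j2, [/\ j1 < L, j2 < L, j1 != j2, cyc i j1 & cyc i j2].
    case: (ltnP i.+1 L) => h1; case: (posnP i) => h2.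
    - exists i.+1, L.-1; split; try lia;
        rewrite /cyc !modS_cases //; try lia; repeat case: ifP => ?; lia.
    - exists i.+1, i.-1; split; try lia;
        rewrite /cyc !modS_cases //; try lia; repeat case: ifP => ?; lia.
    - exists 0, L.-1; split; try lia;
        rewrite /cyc !modS_cases //; try lia; repeat case: ifP => ?; lia.
    - exists 0, i.-1; split; try lia;
        rewrite /cyc !modS_cases //; try lia; repeat case: ifP => ?; lia.
  have := deg1 (g i) (conj (gS i hi) Hc) (g j1) (g j2) (gS _ hj1) (gS _ hj2).
  rewrite !cycadj // => /(_ c1 c2) /(ginj _ _ hj1 hj2) /eqP.
  by rewrite (negbTE Hne).
pose Y i := S :\ g i.
pose e i := induced_rel adj (Y i).
have csym : forall i, connect_sym (e i) by move=> i; apply: induced_sym.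
have gY : forall i k, i < L -> k < L -> k != i -> g k \in Y i.
  move=> i k hi hk hki; rewrite !inE gS // andbT.
  by apply/eqP => H; move/eqP: hki; apply; apply: ginj H.
pose anc i := if i == 0 then g L.-1 else g 0.
have ancY : forall i, i < L -> anc i \in Y i.
  move=> i hi; rewrite /anc; case: ifP => h; apply: gY; lia.
have cconn : forall i j, i < L -> j < L -> j != i -> connect (e i) (g j) (anc i).
  move=> i j hi hj hji; case: (ltnP j i) => h.
  - rewrite /anc (_ : (i == 0) = false); last lia.
    rewrite csym; apply: run => //.
    + by move=> k h1 h2; apply: gadj; lia.
    + by move=> k h1 h2; apply: gY; lia.
  - have H1 : connect (e i) (g j) (g L.-1).
      apply: run; first lia.
      + by move=> k h1 h2; apply: gadj; lia.
      + by move=> k h1 h2; apply: gY; lia.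
    rewrite /anc; case: ifP => // /eqP hi0.
    apply: (connect_trans H1); apply: connect1.
    rewrite /e /induced_rel /= -gL (_ : L = L.-1.+1); last lia.
    rewrite gadj; last lia.
    rewrite -(_ : L = L.-1.+1); last lia.
    rewrite gL gY ?gY //; lia.
pose P i y := [&& y \in Y i, adj y (g i) & ~~ connect (e i) (anc i) y].
have Pex : forall i, i < L -> exists y, P i y.
  move=> i hi.
  have [z [zY nz]] : exists z, z \in Y i /\ ~~ connect (e i) (anc i) z.
    apply: NNPP => H; apply: (ncut i hi) => p q pY qY.
    have Hp : connect (e i) (anc i) p.
      by apply: NNPP => H2; apply: H; exists p; split => //; apply/negP.
    have Hq : connect (e i) (anc i) q.
      by apply: NNPP => H2; apply: H; exists q; split => //; apply/negP.
    by rewrite (csym i) in Hp; apply: connect_trans Hp Hq.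
  have giS : g i \in S by apply: gS.
  have zS : z \in S by move: zY; rewrite !inE => /andP [].
  have [y [yY Hyx Hc]] := escape zY (cS _ _ zS giS).
  exists y; rewrite /P yY Hyx /=; apply/negP => H.
  by move/negP: nz; apply; apply: connect_trans H _; rewrite csym.
pose ys i := odflt (g 0) [pick y | P i y].
have Pys : forall i, i < L -> P i (ys i).
  move=> i hi; rewrite /ys; case: pickP => [y //|H].
  by have [y Hy] := Pex i hi; rewrite H in Hy.
have Fa : forall i j, i < L -> j < L -> j != i -> ~~ adj (g j) (ys i).
  move=> i j hi hj hji; apply/negP => H.
  have /and3P [yY _ nc] := Pys i hi.
  move/negP: nc; apply; rewrite csym; apply: connect_trans (cconn i j hi hj hji).
  by rewrite csym; apply: connect1; rewrite /e /induced_rel /= H yY gY.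
have Fb : forall i j, i < L -> j < L -> ys i != g j.
  move=> i j hi hj; have /and3P [yY Hy nc] := Pys i hi.
  case: (eqVneq j i) => [->|hji].
    by apply/eqP => H; move: yY; rewrite H !inE eqxx.
  apply/eqP => H; move/negP: nc; apply; rewrite H csym; exact: cconn.
have Fd : forall i j, i < L -> j < L -> ~~ adj (ys i) (ys j).
  move=> i j hi hj; case: (eqVneq i j) => [->|hij]; first by rewrite irr.
  apply/negP => H.
  have /and3P [yiY Hyi nci] := Pys i hi.
  have /and3P [yjY Hyj ncj] := Pys j hj.
  have yiYj : ys i \in Y j.
    by rewrite !inE Fb //; move: yiY; rewrite !inE => /andP [].
  move/negP: ncj; apply; rewrite csym.
  have E1 : e j (ys j) (ys i) by rewrite /e /induced_rel /= sym H yjY yiYj.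
  have E2 : e j (ys i) (g i) by rewrite /e /induced_rel /= Hyi yiYj gY // eq_sym.
  apply: (connect_trans (connect1 E1)); apply: (connect_trans (connect1 E2)).
  by apply: cconn => //; rewrite eq_sym.
exists L; split => //.
pose f (a : 'I_L + 'I_L) := match a with inl i => g i | inr i => ys i end.
exists f; split.
- move=> [i|i] [j|j] /= H.
  + by congr inl; apply: val_inj; apply: ginj H.
  + by move: (Fb j i (ltn_ord j) (ltn_ord i)); rewrite H eqxx.
  + by move: (Fb i j (ltn_ord i) (ltn_ord j)); rewrite H eqxx.
  + congr inr; apply: val_inj; apply/eqP; apply: contraT => hij.
    have := Fa i j (ltn_ord i) (ltn_ord j); rewrite eq_sym => /(_ hij).
    have /and3P [_ Hy _] := Pys j (ltn_ord j).
    by rewrite H sym Hy.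
- move=> [i|i] [j|j] /=.
  + by rewrite cycadj.
  + case: (eqVneq i j) => [->|hij].
      have /and3P [_ Hy _] := Pys j (ltn_ord j).
      by rewrite sym Hy.
    by apply/negbTE; apply: Fa.
  + case: (eqVneq i j) => [->|hij].
      have /and3P [_ Hy _] := Pys j (ltn_ord j).
      by rewrite Hy.
    by rewrite sym; apply/negbTE; apply: Fa => //; rewrite eq_sym.
  + by apply/negbTE; apply: Fd.
Qed.



Lemma imsetD1_inj (A B : finType) (f : A -> B) (X : {set A}) v :
  injective f -> f @: (X :\ v) = (f @: X) :\ f v.
Proof.
move=> inj; apply/setP => y; rewrite !inE.
apply/imsetP/andP => [[x xX ->]|[yv /imsetP [x xX Hy]]].
  move: xX; rewrite !inE => /andP [xv xX]; split; last exact: imset_f.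
  by rewrite (inj_eq inj).
exists x => //; rewrite !inE xX andbT; apply: contra yv => /eqP H.
by rewrite Hy H.
Qed.

Lemma conn_sub_to (T : finType) (adj : rel T) (S : {set T})
    (adj' : rel {x : T | x \in S}) (X : {set {x : T | x \in S}}) :
  (forall x y, adj' x y = adj (val x) (val y)) ->
  connected_set adj' X -> connected_set adj (val @: X).
Proof.
move=> Ha cX x y /imsetP [x' xX ->] /imsetP [y' yX ->].
apply: (connect_map (f := val)) (cX _ _ xX yX) => a b.
by rewrite /induced_rel /= Ha => /and3P [-> aX bX]; rewrite !imset_f.
Qed.

Lemma conn_sub_from (T : finType) (adj : rel T) (S : {set T})
    (adj' : rel {x : T | x \in S}) (X : {set {x : T | x \in S}}) :
  (forall x y, adj' x y = adj (val x) (val y)) ->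
  connected_set adj (val @: X) -> connected_set adj' X.
Proof.
move=> Ha cX x y xX yX.
have := cX _ _ (imset_f val xX) (imset_f val yX).
move/(connect_map (f := insubd x) (e2 := induced_rel adj' X)).
rewrite !valKd; apply => a b /and3P [Hab /imsetP [a' aX Ea] /imsetP [b' bX Eb]].
subst a b; by rewrite /induced_rel /= !valKd Ha Hab aX bX.
Qed.

Lemma transfer (T : finType) (adj : rel T) (w : T -> nat) (S : {set T})
    (adj' : rel {x : T | x \in S}) (w' : {x : T | x \in S} -> nat) :
  (forall x y, adj' x y = adj (val x) (val y)) -> (forall x, w' x = w (val x)) ->
  forall X b a', alice_wins_from adj' w' X b a' ->
  forall k, \sum_(x | x \notin S) w x <= 2 * k ->
  alice_wins_from adj w (val @: X) b (a' + k).
Proof.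
move=> Ha Hw X b a' H; elim: H => {X b a'}.
- move=> b a Ha2 k Hk; rewrite imset0; apply: awf_end.
  rewrite (bigID (fun x => x \in S)) /= mulnDr.
  apply: leq_add; last exact: Hk.
  apply: leq_trans Ha2.
  have -> : \sum_(v in S) w v = \sum_(v in val @: [set: {x : T | x \in S}]) w v.
    apply: eq_bigl => v /=; apply/idP/imsetP => [vS|[u _ ->]]; last exact: valP.
    by exists (Sub v vS); rewrite ?inE ?SubK.
  rewrite big_imset /=; last by move=> u1 u2 _ _; apply: val_inj.
  rewrite (eq_bigl xpredT) => [|u]; last by rewrite inE.
  by rewrite leq_eqVlt; apply/orP; left; apply/eqP; apply: eq_bigr => u _; rewrite Hw.
- move=> X a v Xn0 [vX cX'] Hrec IH k Hk.
  apply: (awf_alice (v := val v)).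
  + by apply/set0Pn; exists (val v); exact: imset_f.
  + split; first exact: imset_f.
    rewrite -imsetD1_inj; last exact: val_inj.
    exact: conn_sub_to Ha cX'.
  + rewrite -imsetD1_inj; last exact: val_inj.
    by rewrite -Hw addnAC; apply: IH.
- move=> X a Xn0 Hall IH k Hk; apply: awf_bob.
  + by case/set0Pn: Xn0 => x xX; apply/set0Pn; exists (val x); exact: imset_f.
  + move=> v0 [/imsetP [v vX ->] Hc].
    rewrite -imsetD1_inj; last exact: val_inj.
    apply: IH => //; split => //.
    apply: conn_sub_from Ha _.
    by rewrite imsetD1_inj //; exact: val_inj.
Qed.


Lemma key_vertex (T : finType) (adj : rel T) (S : {set T}) :
  simple_graph adj -> connected_set adj S -> ~ has_induced_odd_corona adj ->
  ~ (exists f : T -> bool, forall x y, x \in S -> y \in S -> adj x y -> f x != f y) ->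
  exists v, legal_move adj S v /\
    exists a b, [/\ a != b, a \in S, b \in S, adj v a & adj v b].
Proof.
move=> sg cS nc nb.
case: (set_0Vmem S) => [S0 | [s sS]].
  by case: nb; exists (fun _ => true) => x y; rewrite S0 inE.
have [bip|[L [g W]]] := bip_or_odd sg.1 sS cS; first by case: nb.
have [L' [g' [W' C']]] := owalk_short sg.1 W.
apply: NNPP => H; apply: nc.
apply: (corona_of_cycle sg W' C' cS) => v lv a b aS bS ha hb.
apply: NNPP => Hab; apply: H; exists v; split => //; exists a, b; split => //.
by apply/eqP.
Qed.

Lemma add_vertex (T : finType) (adj : rel T) (Y : {set T}) z t :
  symmetric adj -> connected_set adj Y -> t \in Y -> adj z t ->
  connected_set adj (z |: Y).
Proof.
move=> sym cY tY hzt.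
have mono : forall x y, connect (induced_rel adj Y) x y ->
    connect (induced_rel adj (z |: Y)) x y.
  move=> x y; apply: (connect_map (f := id)) => a b /and3P [H aY bY].
  by rewrite /induced_rel /= H !inE aY bY !orbT.
have zt : connect (induced_rel adj (z |: Y)) z t.
  by apply: connect1; rewrite /induced_rel /= hzt !inE eqxx tY orbT.
have csym := induced_sym (z |: Y) sym.
move=> x y; rewrite !inE => /orP [/eqP ->|xY] /orP [/eqP ->|yY].
- exact: connect0.
- by apply: connect_trans zt (mono _ _ (cY _ _ tY yY)).
- by rewrite csym; apply: connect_trans zt (mono _ _ (cY _ _ tY xY)).
- exact: mono (cY _ _ xY yY).
Qed.

Lemma legal_extend (T : finType) (adj : rel T) (S : {set T}) v u t :
  symmetric adj -> v \in S -> legal_move adj (S :\ v) u ->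
  t \in S -> t != u -> t != v -> adj v t -> legal_move adj S u.
Proof.
move=> sym vS [uS cU] tS tu tv hvt.
have uv : u != v by move: uS; rewrite !inE => /andP [].
split; first by move: uS; rewrite !inE => /andP [].
have -> : S :\ u = v |: (S :\ v :\ u).
  apply/setP => x; rewrite !inE; case: (eqVneq x v) => [->|xv] /=.
    by rewrite eq_sym uv vS.
  by [].
apply: add_vertex sym cU _ hvt.
by rewrite !inE tu tv.
Qed.


Lemma sum_notin_D1 (T : finType) (w : T -> nat) (S : {set T}) v : v \in S ->
  \sum_(x | x \notin S :\ v) w x = w v + \sum_(x | x \notin S) w x.
Proof.
move=> vS; rewrite (bigD1 v) /=; last by rewrite !inE eqxx.
congr (_ + _); apply: eq_bigl => x; rewrite !inE.
by case: (eqVneq x v) => [->|xv]; rewrite ?eqxx ?vS ?xv /= ?andbT ?andbF.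
Qed.

Lemma imset_val_setT (T : finType) (S : {set T}) :
  val @: [set: {x : T | x \in S}] = S.
Proof.
apply/setP => v; apply/imsetP/idP => [[u _ ->]|vS]; first exact: valP.
by exists (Sub v vS); rewrite ?inE ?SubK.
Qed.

Lemma main_ind :
  (forall (T : finType) (adj : rel T) (w : T -> nat),
     simple_graph adj -> connected_graph adj -> bipartite adj ->
     ~~ odd #|T| -> (forall v, w v <= 1) -> alice_wins adj w) ->
  forall (T : finType) (adj : rel T) (w : T -> nat),
  simple_graph adj -> ~ has_induced_odd_corona adj -> (forall v, w v <= 1) ->
  forall n (S : {set T}) a, #|S| <= n -> connected_set adj S -> ~~ odd #|S| ->
  \sum_(x | x \notin S) w x <= 2 * a -> alice_wins_from adj w S true a.
Proof.
move=> Hyp T adj w sg nc w1 n.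
elim: n => [|n IH] S a hn cS ev hs.
  have S0 : S = set0 by apply/eqP; rewrite -cards_eq0; lia.
  subst S; apply: awf_end.
  by rewrite (eq_bigl (fun x => x \notin set0)) // => x; rewrite inE.
case: (set_0Vmem S) => [S0|[s sS]].
  subst S; apply: awf_end.
  by rewrite (eq_bigl (fun x => x \notin set0)) // => x; rewrite inE.
have step : forall v, legal_move adj S v ->
    (forall u, legal_move adj (S :\ v) u -> w u <= w v) ->
    alice_wins_from adj w S true a.
  move=> v [vS cv] Hu; apply: (awf_alice (v := v)).
  - by apply/set0Pn; exists s.
  - by split.
  have cS1 := cardsD1 v S; rewrite vS in cS1.
  apply: awf_bob.
    apply/set0Pn; apply: NNPP => H.
    have : S :\ v = set0 by apply/eqP; apply/set0Pn.
    by move=> E; move: cS1 ev; rewrite E cards0 => ->.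
  move=> u [uS cu].
  have cS2 := cardsD1 u (S :\ v); rewrite uS in cS2.
  have wu := Hu u (conj uS cu).
  have uS' : u \in S by move: uS; rewrite !inE => /andP [].
  have hsum := sum_notin_D1 w uS.
  have hsum2 := sum_notin_D1 w vS.
  apply: IH => //.
  - lia.
  - by move: ev; rewrite cS1 cS2 /=; case: (odd _).
  - rewrite hsum hsum2; lia.
case: (classic (exists f : T -> bool, forall x y, x \in S -> y \in S -> adj x y -> f x != f y)).
  move=> [f Hf].
  pose adj' : rel {x : T | x \in S} := fun x y => adj (val x) (val y).
  pose w' : {x : T | x \in S} -> nat := fun x => w (val x).
  have Ha : forall x y, adj' x y = adj (val x) (val y) by [].
  have Hw : forall x, w' x = w (val x) by [].
  have H := Hyp _ adj' w'.
  have := transfer Ha Hw (H _ _ _ _ _) hs.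
  rewrite imset_val_setT add0n; apply.
  - by split; [move=> x y; exact: sg.1 | move=> x; exact: sg.2].
  - by apply: conn_sub_from Ha _; rewrite imset_val_setT.
  - by exists (fun x => f (val x)) => x y Hxy; apply: Hf => //; apply: valP.
  - by rewrite card_sig.
  - by move=> x; apply: w1.
move=> nb.
have [v0 [lv0 [x [y [xy xS yS hx hy]]]]] := key_vertex sg cS nc nb.
case: (classic (exists u, legal_move adj S u /\ w u = 1)) => [[u [lu wu]]|Hno].
  by apply: (step u lu) => u' _; rewrite wu.
apply: (step v0 lv0) => u lu.
have xv : x != v0 by apply: contraTneq hx => ->; rewrite sg.2.
have yv : y != v0 by apply: contraTneq hy => ->; rewrite sg.2.
have lS : legal_move adj S u.
  case: (eqVneq x u) => [xu|xu].
    apply: (legal_extend sg.1 lv0.1 lu yS _ yv hy).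
    by rewrite -xu eq_sym.
  exact: (legal_extend sg.1 lv0.1 lu xS xu xv hx).
have : w u != 1 by apply/eqP => H; apply: Hno; exists u.
have := w1 u; lia.
Qed.

Theorem mainTheorem1 :
  (forall (T : finType) (adj : rel T) (w : T -> nat),
     simple_graph adj -> connected_graph adj -> bipartite adj ->
     ~~ odd #|T| -> (forall v, w v <= 1) -> alice_wins adj w) ->
  forall (T : finType) (adj : rel T) (w : T -> nat),
    simple_graph adj -> connected_graph adj -> ~~ odd #|T| ->
    ~ has_induced_odd_corona adj -> (forall v, w v <= 1) ->
    alice_wins adj w.
Proof.
move=> Hyp T adj w sg cG ev nc w1.
apply: (main_ind Hyp sg nc w1 (leqnn #|[set: T]|)) => //.
- by rewrite cardsT.
- by rewrite (eq_bigl xpred0) ?big_pred0 // => x; rewrite inE.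
Qed.
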